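(* Let $\mathcal M$ be an o-minimal structure in a language $\mathcal L$ with universe $M$, and $\mathcal N$ an expansion of $\mathcal M$ such that every open definable set is $\mathcal L$-definable and $\mathcal N$ admits a dimension function $\dim$ compatible with $\mathcal M$. Let $F:X\subseteq M^n\to M^m$ be an $\mathcal L$-definable map and $D\subseteq X$ a definable set with $\dim(X\setminus D)<\dim X$, such that the restriction of $F$ to $D$ is injective. Then there is an $\mathcal L$-definable set $Y\subseteq X$ with $\dim(X\setminus Y)<\dim X$ such that the restriction of $F$ to $Y$ is injective.
   Context: ''Definable'' means definable in $\mathcal N$ with parameters; ''$\mathcal L$-definable'' means definable in $\mathcal M$ with parameters. A dimension function compatible with $\mathcal M$ is a map $\dim$ from definable sets to $\{-\infty\}\cup\mathbb N$ such that for all definable $X,Y\subseteq M^n$, $a\in M$: (D1) $\dim\{a\}=0$, $\dim M=1$, $\dim X=-\infty$ iff $X=\emptyset$; (D2) $\dim(X\cup Y)=\max\{\dim X,\dim Y\}$; (D3) for a definable family $\{X_t\}_{t\in I}$ of pairwise disjoint sets: (a) each $\{t\in I:\dim X_t=d\}$ is definable; (b) if all $X_t$ have dimension $k$ then $\dim\bigcup_t X_t=\dim I+k$; (D4) definable bijections preserve $\dim$; (D5) on $\mathcal L$-definable sets $\dim$ is the o-minimal dimension; (D6) every definable $f:M^n\to M$ agrees with an $\mathcal L$-definable $F:M^n\to M$ outside a definable set of dimension $<n$. *)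

(* Defs.v *)
From mathcomp Require Import all_boot.
From Stdlib Require Import List.

Set Implicit Arguments.
Unset Strict Implicit.
Unset Printing Implicit Defensive.

Definition setfam (M : Type) := forall n : nat, (n.-tuple M -> Prop) -> Prop.

Section Defs.
Variable M : Type.
Variable lt : M -> M -> Prop.

Definition DLO : Prop :=
  (forall x, ~ lt x x) /\
  (forall x y z, lt x y -> lt y z -> lt x z) /\
  (forall x y, lt x y \/ x = y \/ lt y x) /\
  (forall x y, lt x y -> exists z, lt x z /\ lt z y) /\
  (forall x, exists y, lt x y) /\
  (forall x, exists y, lt y x).

(* A structure on M in the sense of van den Dries, with all parameters
   (points of M) definable. *)
Definition is_structure (S : setfam M) : Prop :=
  (forall n, S n (fun _ => False)) /\
  (forall n A B, S n A -> S n B -> S n (fun x => A x \/ B x)) /\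
  (forall n A, S n A -> S n (fun x => ~ A x)) /\
  (forall n m (A : n.-tuple M -> Prop) (B : m.-tuple M -> Prop),
      S n A -> S m B ->
      S (n + m) (fun z => exists x y, A x /\ B y /\ z = cat_tuple x y)) /\
  (forall n m (A : (n + m).-tuple M -> Prop),
      S (n + m) A -> S n (fun x => exists y : m.-tuple M, A (cat_tuple x y))) /\
  (forall n (i j : 'I_n), S n (fun x => tnth x i = tnth x j)) /\
  (forall a : M, S 1 (fun x => tnth x ord0 = a)).

(* intervals with endpoints in M ∪ {±∞} (None = -∞ on the left, +∞ on the right) *)
Definition in_interval (iv : option M * option M) (x : M) : Prop :=
  match iv.1 with None => True | Some a => lt a x end /\
  match iv.2 with None => True | Some b => lt x b end.

Definition ominimal (S : setfam M) : Prop :=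
  DLO /\ is_structure S /\
  S 2 (fun z => lt (tnth z ord0) (tnth z ord_max)) /\
  (forall A : 1.-tuple M -> Prop, S 1 A ->
     exists (pts : list M) (ivs : list (option M * option M)),
       forall x, A x <-> (In (tnth x ord0) pts \/
                          exists iv, In iv ivs /\ in_interval iv (tnth x ord0))).

Definition expansion (S S' : setfam M) : Prop :=
  is_structure S' /\ forall n A, S n A -> S' n A.

Definition in_box n (a b x : n.-tuple M) : Prop :=
  forall i, lt (tnth a i) (tnth x i) /\ lt (tnth x i) (tnth b i).

Definition open_set n (U : n.-tuple M -> Prop) : Prop :=
  forall x, U x -> exists a b, in_box a b x /\ forall y, in_box a b y -> U y.

(* dimensions: None = -oo *)
Definition dlt (e f : option nat) : Prop :=
  match e, f with
  | None, Some _ => True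
  | Some a, Some b => (a < b)%N
  | _, _ => False
  end.
Definition dmax (e f : option nat) : option nat :=
  match e, f with
  | None, _ => f
  | _, None => e
  | Some a, Some b => Some (maxn a b)
  end.
Definition dadd (e f : option nat) : option nat :=
  match e, f with
  | Some a, Some b => Some (a + b)%N
  | _, _ => None
  end.

Definition proj_interior n (X : n.-tuple M -> Prop) (d : nat) : Prop :=
  exists sigma : 'I_d -> 'I_n,
    (forall i j : 'I_d, (i < j)%N -> (sigma i < sigma j)%N) /\
    exists U : d.-tuple M -> Prop,
      (exists u, U u) /\ open_set U /\
      forall y, U y -> exists x, X x /\ y = [tuple tnth x (sigma i) | i < d].

Definition omin_dim_is n (X : n.-tuple M -> Prop) (e : option nat) : Prop :=
  match e with
  | None => forall x, ~ X x
  | Some d => (exists x, X x) /\ proj_interior X d /\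
              forall d', proj_interior X d' -> (d' <= d)%N
  end.

Definition graph_on n m (X : n.-tuple M -> Prop) (F : n.-tuple M -> m.-tuple M)
  : (n + m).-tuple M -> Prop :=
  fun z => exists x, X x /\ z = cat_tuple x (F x).

Definition fiber k n (Z : (k + n).-tuple M -> Prop) (t : k.-tuple M) : n.-tuple M -> Prop :=
  fun x => Z (cat_tuple t x).

(* dimension function on N (definable sets = S'), compatible with M (S) *)
Definition dim_function (S S' : setfam M)
  (dim : forall n, (n.-tuple M -> Prop) -> option nat) : Prop :=
  (forall a : M, dim 1 (fun x => tnth x ord0 = a) = Some 0%N) /\
  dim 1 (fun _ => True) = Some 1%N /\
  (forall n X, S' n X -> (dim n X = None <-> forall x, ~ X x)) /\
  (forall n X Y, S' n X -> S' n Y ->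
     dim n (fun x => X x \/ Y x) = dmax (dim n X) (dim n Y)) /\
  (forall k n (I : k.-tuple M -> Prop) (Z : (k + n).-tuple M -> Prop),
     S' k I -> S' (k + n) Z ->
     (forall t t', I t -> I t' -> t <> t' ->
        forall x, ~ (fiber Z t x /\ fiber Z t' x)) ->
     (forall d, S' k (fun t => I t /\ dim n (fiber Z t) = d)) /\
     (forall d, (forall t, I t -> dim n (fiber Z t) = d) ->
        dim n (fun x => exists t, I t /\ fiber Z t x) = dadd (dim k I) d)) /\
  (forall n m (X : n.-tuple M -> Prop) (Y : m.-tuple M -> Prop)
          (f : n.-tuple M -> m.-tuple M),
     S' n X -> S' m Y -> S' (n + m) (graph_on X f) ->
     (forall x, X x -> Y (f x)) ->
     (forall x x', X x -> X x' -> f x = f x' -> x = x') ->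
     (forall y, Y y -> exists x, X x /\ f x = y) ->
     dim n X = dim m Y) /\
  (forall n X, S n X -> omin_dim_is X (dim n X)) /\
  (forall n (f : n.-tuple M -> M),
     S' (n + 1) (graph_on (fun _ => True) (fun x => [tuple f x])) ->
     exists G : n.-tuple M -> M,
       S (n + 1) (graph_on (fun _ => True) (fun x => [tuple G x])) /\
       exists B, S' n B /\ dlt (dim n B) (Some n) /\
                 forall x, f x <> G x -> B x).

End Defs.

(* Main.v *)
Require Import Defs.
From mathcomp Require Import all_boot.
From Stdlib Require Import FunctionalExtensionality PropExtensionality Classical.
Unset Strict Implicit.
Unset Printing Implicit Defensive.

Lemma pred_ext {T : Type} {A B : T -> Prop} : (forall x, A x <-> B x) -> A = B.
Proof. move=> h; apply: functional_extensionality => x; apply: propositional_extensionality; exact: h. Qed.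

Section Tools.
Context {M : Type}.

Definition lsp n m (w : (n+m).-tuple M) : n.-tuple M := [tuple tnth w (lshift m i) | i < n].
Definition rsp n m (w : (n+m).-tuple M) : m.-tuple M := [tuple tnth w (rshift n i) | i < m].

Arguments lsp {n m}. Arguments rsp {n m}.
Lemma lsp_cat {n m} (x : n.-tuple M) (y : m.-tuple M) : lsp (cat_tuple x y) = x.
Proof. apply: eq_from_tnth => i; by rewrite tnth_mktuple tnth_lshift. Qed.
Lemma rsp_cat {n m} (x : n.-tuple M) (y : m.-tuple M) : rsp (cat_tuple x y) = y.
Proof. apply: eq_from_tnth => i; by rewrite tnth_mktuple tnth_rshift. Qed.
Lemma cat_lr {n m} (w : (n+m).-tuple M) : cat_tuple (lsp w) (rsp w) = w.
Proof.
apply: eq_from_tnth => i; case: (split_ordP i) => j ->.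
  by rewrite tnth_lshift tnth_mktuple.
by rewrite tnth_rshift tnth_mktuple.
Qed.

Definition cmap n k (f : n.-tuple M -> k.-tuple M) :=
  exists pi : 'I_k -> 'I_n, forall x i, tnth (f x) i = tnth x (pi i).

Arguments cmap {n k}.
Lemma cmap_id n : cmap (fun x : n.-tuple M => x).
Proof. by exists id. Qed.
Lemma cmap_lsp n m : cmap (@lsp n m).
Proof. by exists (lshift m) => x i; rewrite tnth_mktuple. Qed.
Lemma cmap_rsp n m : cmap (@rsp n m).
Proof. by exists (@rshift n m) => x i; rewrite tnth_mktuple. Qed.
Lemma cmap_comp {n k l} {f : n.-tuple M -> k.-tuple M} {g : k.-tuple M -> l.-tuple M} :
  cmap f -> cmap g -> cmap (fun x => g (f x)).
Proof. move=> [p hp] [q hq]; exists (fun i => p (q i)) => x i; by rewrite hq hp. Qed.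
Lemma cmap_cat {n k l} {f : n.-tuple M -> k.-tuple M} {g : n.-tuple M -> l.-tuple M} :
  cmap f -> cmap g -> cmap (fun x => cat_tuple (f x) (g x)).
Proof.
move=> [p hp] [q hq].
exists (fun i => match split i with inl a => p a | inr b => q b end) => x i.
case: (split_ordP i) => j ->.
  by rewrite tnth_lshift hp.
by rewrite tnth_rshift hq.
Qed.

Context {S : setfam M} (HS : is_structure S).

Lemma S_ext {n} {A B : n.-tuple M -> Prop} : (forall x, A x <-> B x) -> S n A -> S n B.
Proof. by move=> h; rewrite (pred_ext h). Qed.

Lemma S_False {n} : S n (fun _ => False).
Proof. by case: HS. Qed.
Lemma S_or {n A B} : S n A -> S n B -> S n (fun x => A x \/ B x).
Proof. by case: HS => _ [h _]; apply: h. Qed.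
Lemma S_not {n A} : S n A -> S n (fun x => ~ A x).
Proof. by case: HS => _ [_ [h _]]; apply: h. Qed.
Lemma S_True {n} : S n (fun _ => True).
Proof. apply: S_ext (S_not (@S_False n)) => x; tauto. Qed.
Lemma S_and {n A B} : S n A -> S n B -> S n (fun x => A x /\ B x).
Proof.
move=> hA hB; apply: S_ext (S_not (S_or (S_not hA) (S_not hB))) => x.
split; last tauto. move=> h; split; apply: NNPP; tauto.
Qed.
Lemma S_prod {n m} {A : n.-tuple M -> Prop} {B : m.-tuple M -> Prop} :
  S n A -> S m B -> S (n + m) (fun z => exists x y, A x /\ B y /\ z = cat_tuple x y).
Proof. by case: HS => _ [_ [_ [h _]]]; apply: h. Qed.
Lemma S_proj {n m} {A : (n + m).-tuple M -> Prop} :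
  S (n + m) A -> S n (fun x => exists y : m.-tuple M, A (cat_tuple x y)).
Proof. by case: HS => _ [_ [_ [_ [h _]]]]; apply: h. Qed.
Lemma S_diag {n} (i j : 'I_n) : S n (fun x => tnth x i = tnth x j).
Proof. by case: HS => _ [_ [_ [_ [_ [h _]]]]]; apply: h. Qed.
Lemma S_par (a : M) : S 1 (fun x => tnth x ord0 = a).
Proof. by case: HS => _ [_ [_ [_ [_ [_ h]]]]]; apply: h. Qed.

Lemma S_bigand {n k} (A : 'I_n -> k.-tuple M -> Prop) :
  (forall i, S k (A i)) -> S k (fun x => forall i, A i x).
Proof.
move=> hA.
suff h : forall j, S k (fun x => forall i : 'I_n, (i < j)%N -> A i x).
  apply: S_ext (h n) => x; split => H i //; exact: H (ltn_ord i).
elim=> [|j IH].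
  apply: S_ext (@S_True k) => x; split => // _ i; by rewrite ltn0.
case: (ltnP j n) => hj.
  apply: S_ext (S_and IH (hA (Ordinal hj))) => x; split.
    move=> [H1 H2] i; rewrite ltnS leq_eqVlt; case/orP => [/eqP e|]; last exact: H1.
    by have -> : i = Ordinal hj by apply: val_inj.
  move=> H; split; first by move=> i hi; apply: H; apply: ltnW.
  by apply: H.
apply: S_ext IH => x; split => H i hi; apply: H.
  exact: leq_trans (ltn_ord i) hj.
exact: leq_trans (ltn_ord i) (leq_trans hj (leqnSn j)).
Qed.

Lemma S_pull {n k} {f : n.-tuple M -> k.-tuple M} {A} :
  cmap f -> S k A -> S n (fun x => A (f x)).
Proof.
move=> [pi hpi] hA.
have hB := S_and (S_bigand (fun i w => tnth w (@rshift n k i) = tnth w (lshift k (pi i)))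
   (fun i => S_diag _ _)) (S_prod (@S_True n) hA).
apply: S_ext (S_proj hB) => x; split.
  move=> [y [H1 [x' [y' [_ [Hy' e]]]]]].
  have ey : y = y' by rewrite -(rsp_cat x y) e rsp_cat.
  have -> : f x = y; last by rewrite ey.
  apply: eq_from_tnth => i; rewrite hpi; move: (H1 i).
  by rewrite tnth_rshift tnth_lshift.
move=> H; exists (f x); split.
  by move=> i; rewrite tnth_rshift tnth_lshift hpi.
by exists x, (f x).
Qed.

Lemma cmap_pt {k} (i : 'I_k) : cmap (fun s : k.-tuple M => [tuple tnth s i | _ < 1]).
Proof. by exists (fun _ => i) => x j; rewrite tnth_mktuple. Qed.

Lemma S_const {k} (t : k.-tuple M) : S k (fun s => s = t).
Proof.
have hi : forall i, S k (fun s => tnth s i = tnth t i).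
  move=> i; apply: S_ext (S_pull (cmap_pt i) (S_par (tnth t i))) => s; by rewrite tnth_mktuple.
have h := S_bigand (fun i (s : k.-tuple M) => tnth s i = tnth t i) hi.
apply: S_ext h => s; split; first by move=> H; apply: eq_from_tnth.
by move=> ->.
Qed.

Lemma S_exfirst {k n} {I : k.-tuple M -> Prop} {Z : (k + n).-tuple M -> Prop} :
  S k I -> S (k + n) Z -> S n (fun y => exists t, I t /\ Z (cat_tuple t y)).
Proof.
move=> hI hZ.
have hW := S_and (S_pull (@cmap_rsp n k) hI)
                 (S_pull (cmap_cat (@cmap_rsp n k) (@cmap_lsp n k)) hZ).
apply: S_ext (S_proj hW) => y; split.
  by move=> [t]; rewrite lsp_cat rsp_cat => H; exists t.
by move=> [t H]; exists t; rewrite lsp_cat rsp_cat.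
Qed.

Lemma S_fiber {k n} {Z : (k + n).-tuple M -> Prop} (t : k.-tuple M) :
  S (k + n) Z -> S n (fiber Z t).
Proof.
move=> hZ; apply: S_ext (S_exfirst (S_const t) hZ) => y; split.
  by move=> [s [-> H]].
by move=> H; exists t.
Qed.

Lemma S_eqlr {n} : S (n + n) (fun w : (n + n).-tuple M => lsp w = rsp w).
Proof.
apply: S_ext (S_bigand (fun i w => tnth w (lshift n i) = tnth w (rshift n i)) (fun i => S_diag _ _)) => w.
split; first by move=> H; apply: eq_from_tnth => i; rewrite !tnth_mktuple.
by move=> e i; move: (congr1 (fun t => tnth t i) e) => /=; rewrite !tnth_mktuple.
Qed.
End Tools.

Arguments lsp {M n m}. Arguments rsp {M n m}. Arguments cmap {M n k}.

Definition dle (e f : option nat) : Prop :=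
  match e, f with
  | None, _ => True
  | Some a, Some b => (a <= b)%N
  | Some _, None => False
  end.

Lemma dle_dmax e f g : dle e g -> dle f g -> dle (dmax e f) g.
Proof. case: e => [a|]; case: f => [b|]; case: g => [c|] //= h1 h2; by rewrite ?geq_max ?h1 ?h2. Qed.
Lemma dle_dlt e f g : dle e f -> dlt f g -> dlt e g.
Proof. case: e => [a|]; case: f => [b|]; case: g => [c|] //= h1 h2; exact: leq_ltn_trans h1 h2. Qed.
Lemma dle_trans e f g : dle e f -> dle f g -> dle e g.
Proof. case: e => [a|]; case: f => [b|]; case: g => [c|] //= h1 h2; exact: leq_trans h1 h2. Qed.
Lemma dle_dadd e k : dle e (dadd e (Some k)).
Proof. case: e => //= a; exact: leq_addr. Qed.
Lemma dle_refl e : dle e e.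
Proof. by case: e => //= a; rewrite leqnn. Qed.

Theorem lemma2p3 (M : Type) (lt : M -> M -> Prop) (S S' : setfam M)
  (dim : forall n, (n.-tuple M -> Prop) -> option nat)
  (HM : ominimal lt S) (HN : expansion S S')
  (Hopen : forall n (U : n.-tuple M -> Prop), S' n U -> open_set lt U -> S n U)
  (Hdim : dim_function lt S S' dim)
  (n m : nat) (X : n.-tuple M -> Prop) (F : n.-tuple M -> m.-tuple M)
  (HX : S n X) (HF : S (n + m) (graph_on X F))
  (D : n.-tuple M -> Prop) (HD : S' n D) (HDX : forall x, D x -> X x)
  (HdimD : dlt (dim n (fun x => X x /\ ~ D x)) (dim n X))
  (Hinj : forall x y, D x -> D y -> F x = F y -> x = y) :
  exists Y : n.-tuple M -> Prop,
    S n Y /\ (forall x, Y x -> X x) /\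
    dlt (dim n (fun x => X x /\ ~ Y x)) (dim n X) /\
    (forall x y, Y x -> Y y -> F x = F y -> x = y).
Proof.
have HS : is_structure S by case: HM => _ [].
case: HN => HS' HSS'.
case: Hdim => _ [_ [D1 [D2 [D3 _]]]].
have Gcat : forall x z, graph_on X F (cat_tuple x z) <-> X x /\ z = F x.
  move=> x z; split.
    move=> [x' [hx' e]].
    have ex : x = x' by rewrite -(lsp_cat x z) e lsp_cat.
    have ez : z = F x' by rewrite -(rsp_cat x z) e rsp_cat.
    by subst.
  by move=> [hx ->]; exists x.
pose E0 := fun w : (n + n).-tuple M => X (lsp w) /\ X (rsp w) /\ F (lsp w) = F (rsp w).
have hE0 : S (n + n) E0.
  have hW := S_and HS
    (S_pull HS (cmap_cat (cmap_comp (cmap_lsp _ _) (cmap_lsp _ _)) (cmap_rsp _ _)) HF)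
    (S_pull HS (cmap_cat (cmap_comp (cmap_lsp _ _) (cmap_rsp _ _)) (cmap_rsp _ _)) HF).
  apply: S_ext (S_proj HS hW) => w; rewrite /E0; split.
    move=> [z]; rewrite !lsp_cat !rsp_cat !Gcat => -[[h1 ->] [h2 e]]; by rewrite -e.
  move=> [h1 [h2 e]]; exists (F (lsp w)); rewrite !lsp_cat !rsp_cat !Gcat; by rewrite e.
pose Y := fun x => X x /\ ~ (exists y, (X x /\ X y /\ F x = F y) /\ x <> y).
exists Y.
have hY : S n Y.
  have hW := S_and HS hE0 (S_not HS (S_eqlr HS)).
  apply: S_ext (S_and HS HX (S_not HS (S_proj HS hW))) => x.
  rewrite /Y /E0; split; move=> [h1 h2]; split=> // -[y H]; apply: h2; exists y;
  move: H; by rewrite !lsp_cat !rsp_cat.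
split; first exact: hY.
split; first by move=> x [].
split; last first.
  move=> x y [hx H] [hy _] e; apply: NNPP => ne; apply: H; exists y; by split.
have mono : forall k (A B : k.-tuple M -> Prop), S' k A -> S' k B ->
    (forall x, A x -> B x) -> dle (dim k A) (dim k B).
  move=> k A B hA hB sub; have := D2 k A B hA hB.
  rewrite (@pred_ext _ (fun x => A x \/ B x) B); last by move=> x; split; [case=> //; exact: sub | right].
  case: (dim k A) => [a|]; case: (dim k B) => [b|] //=.
    by case=> ->; exact: leq_maxl.
pose XmD := fun x => X x /\ ~ D x.
have hXmD : S' n XmD := S_and HS' (HSS' _ _ HX) (S_not HS' HD).
pose Z := fun w : (n+n).-tuple M => E0 w /\ D (lsp w) /\ ~ D (rsp w).
have hZ : S' (n+n) Z := S_and HS' (HSS' _ _ hE0)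
   (S_and HS' (S_pull HS' (cmap_lsp _ _) HD) (S_not HS' (S_pull HS' (cmap_rsp _ _) HD))).
have Zcat : forall t y, Z (cat_tuple t y) <-> (X t /\ X y /\ F t = F y) /\ D t /\ ~ D y.
  by move=> t y; rewrite /Z /E0 !lsp_cat !rsp_cat.
pose Q := fun t => exists y, Z (cat_tuple t y).
have hQ : S' n Q := S_proj HS' hZ.
have disj : forall I : n.-tuple M -> Prop, forall t t', I t -> I t' -> t <> t' ->
    forall x, ~ (fiber Z t x /\ fiber Z t' x).
  move=> I0 t t' _ _ ne x; rewrite /fiber !Zcat => -[[[_ [_ e1]] [d1 _]] [[_ [_ e2]] [d2 _]]].
  by apply: ne; apply: Hinj => //; rewrite e1 e2.
have hQd : forall d, S' n (fun t => Q t /\ dim n (fiber Z t) = d) :=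
  (D3 n n Q Z hQ hZ (disj Q)).1.
have hQdle : forall k, dle (dim n (fun t => Q t /\ dim n (fiber Z t) = Some k)) (dim n XmD).
  move=> k.
  have hI := hQd (Some k).
  have := (D3 n n _ Z hI hZ (disj _)).2 (Some k) (fun t ht => ht.2).
  move=> e; apply: dle_trans (dle_dadd _ k) _; rewrite -e.
  apply: mono; first exact: (S_exfirst HS' hI hZ).
    exact: hXmD.
  move=> y [t [_ H]]; move: H; rewrite /fiber Zcat /XmD; tauto.
pose U := fun j t => Q t /\ exists k, (k <= j)%N /\ dim n (fiber Z t) = Some k.
have hU : forall j, S' n (U j) /\ dle (dim n (U j)) (dim n XmD).
  elim=> [|j [IH1 IH2]].
    have e : U 0 = (fun t => Q t /\ dim n (fiber Z t) = Some 0).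
      apply: pred_ext => t; rewrite /U; split.
        by move=> [q [k [hk e]]]; split => //; move: hk; rewrite leqn0 => /eqP ek; rewrite -ek.
      by move=> [q e]; split => //; exists 0.
    by rewrite e; split; [exact: hQd | exact: hQdle].
  have e : U j.+1 = (fun t => U j t \/ (Q t /\ dim n (fiber Z t) = Some j.+1)).
    apply: pred_ext => t; rewrite /U; split.
      move=> [q [k [hk e]]]; move: hk; rewrite leq_eqVlt => /orP [/eqP ek|hk].
        by right; rewrite -ek.
      by left; split => //; exists k.
    case=> [[q [k [hk e]]]|[q e]]; split => //.
      by exists k; split => //; apply: leq_trans hk _.
    by exists j.+1.
  rewrite e; split; first exact: (S_or HS' IH1 (hQd (Some j.+1))).
  rewrite D2; [| exact: IH1 | exact: (hQd (Some j.+1))].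
  exact: dle_dmax IH2 (hQdle _).
pose N := match dim n (fun _ => True) with Some N => N | None => 0 end.
have hQU : dle (dim n Q) (dim n XmD).
  apply: dle_trans (hU N).2.
  apply: (mono _ _ _ hQ (hU N).1).
  move=> t ht; split => //.
  have hf : S' n (fiber Z t) := S_fiber HS' t hZ.
  case ed: (dim n (fiber Z t)) => [k|].
    exists k; split => //.
    have := mono _ _ _ hf (S_True HS') (fun _ _ => I).
    by rewrite ed /N; case: (dim n (fun _ => True)).
  exfalso; case: ht => y hy; exact: ((D1 n _ hf).1 ed y hy).
apply: dle_dlt _ HdimD.
have hXmY : S' n (fun x => X x /\ ~ Y x) := HSS' _ _ (S_and HS HX (S_not HS hY)).
apply: dle_trans (mono _ _ _ hXmY (S_or HS' hXmD hQ) _) _.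
  move=> x [hx hnY].
  have [y [[_ [hy e]] ne]] : exists y, (X x /\ X y /\ F x = F y) /\ x <> y.
    by apply: NNPP => H; apply: hnY; split.
  case: (classic (D x)) => dx; last by left; split.
  have ndy : ~ D y by move=> dy; apply: ne; apply: Hinj.
  right; exists y; rewrite Zcat; tauto.
rewrite D2 //.
exact: dle_dmax (dle_refl _) hQU.
Qed.
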